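(* Let $\mathcal{X}=\{x_1,\dots,x_N\}$, $\Theta=\{\theta_1,\dots,\theta_M\}$, $\mathcal{A}$ finite with $|\mathcal{A}|=K$, utilities $v_D,v_U:\mathcal{X}\times\Theta\times\mathcal{A}\to\mathbb{R}$, beliefs $b_D(\cdot|x)\in\Delta\Theta$ for $x\in\mathcal{X}$, a common prior $\mathbf p^0\in\Delta\mathcal{X}$, and the signal set $\mathcal{S}=\{s_{\{a^1,\dots,a^M\}}:a^l\in\mathcal{A}\}$ with $K^M$ elements. Call a generator $\pi:\mathcal{X}\to\Delta\mathcal{S}$ credible if $\sum_{x\in\mathcal{X}}[v_U(x,\theta_l,a^l)-v_U(x,\theta_l,a^h)]\pi(s_{\{a^1,\dots,a^M\}}|x)\mathbf p^0(x)\ge0$ for all $s_{\{a^1,\dots,a^M\}}\in\mathcal{S}$, $a^h\in\mathcal{A}$, $l\in\{1,\dots,M\}$, and let $$\bar v_D(\pi,\mathbf p^0)=\sum_{x}\mathbf p^0(x)\sum_{s_{\{a^1,\dots,a^M\}}\in\mathcal{S}}\pi(s_{\{a^1,\dots,a^M\}}|x)\sum_{l=1}^M b_D(\theta_l|x)v_D(x,\theta_l,a^l).$$ Call a credible generator optimal if it maximizes $\bar v_D(\cdot,\mathbf p^0)$ over all credible generators, and let $V_D(\mathbf p^0)$ be this maximum. Then the set of optimal generators consists of either exactly one or infinitely many generators, all achieving $V_D(\mathbf p^0)$. Moreover, there exists an optimal generator $\pi^*$ such that, for each state $x\in\mathcal{X}$, $\pi^*(s|x)=0$ for at least $K^M-N$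 signals $s\in\mathcal{S}$.
   Context: This is the benchmark case of a defender–user game: the defender cannot modulate utilities (no utility transfer) and both the defender and every user type hold the same prior $\mathbf p^0$ over the state. A signal $s_{\{a^1,\dots,a^M\}}$ is a security policy prescribing action $a^l$ to type $\theta_l$; credibility means every prescribed action is a best response of that type under the Bayesian posterior. *)

(* Defs.v *)
From HB Require Import structures.
From mathcomp Require Import all_boot all_order all_algebra.
From mathcomp Require Import reals.
Set Implicit Arguments. Unset Strict Implicit. Unset Printing Implicit Defensive.
Import Order.TTheory GRing.Theory Num.Theory.
Local Open Scope ring_scope.

Section Game.
Variables (R : realType) (X Th A : finType).

(* A signal s_{a^1,...,a^M} is a security policy: a map from types to actions. *)
Definition signal := {ffun Th -> A}.

Definition is_dist (T : finType) (p : T -> R) : Prop :=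
  (forall t, 0 <= p t) /\ \sum_(t : T) p t = 1.

(* A generator pi : X -> Delta S ; pi x s = pi(s | x). *)
Definition generator := {ffun X -> {ffun signal -> R}}.

Definition is_generator (pi : generator) : Prop :=
  forall x, is_dist (fun s : signal => pi x s).

Variables (vD vU : X -> Th -> A -> R) (bD : X -> Th -> R) (p0 : X -> R).

Definition credible (pi : generator) : Prop :=
  is_generator pi /\
  forall (s : signal) (ah : A) (l : Th),
    0 <= \sum_(x : X) (vU x l (s l) - vU x l ah) * pi x s * p0 x.

Definition vbarD (pi : generator) : R :=
  \sum_(x : X) p0 x * \sum_(s : signal) pi x s *
     \sum_(l : Th) bD x l * vD x l (s l).

Definition optimal (pi : generator) : Prop :=
  credible pi /\ forall pi', credible pi' -> vbarD pi' <= vbarD pi.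

End Game.

(* Main.v *)
Require Import Defs.
From HB Require Import structures.
From mathcomp Require Import all_boot all_order all_algebra.
From mathcomp Require Import reals.
From mathcomp Require Import ring lra zify.
From Stdlib Require Import Classical.
Import Order.TTheory GRing.Theory Num.Theory.
Local Open Scope ring_scope.
Lemma fin_argmin (R : realDomainType) (T : finType) (P : pred T) (f : T -> R) j0 :
  P j0 -> exists2 j, P j & forall k, P k -> f j <= f k.
Proof. move=> Pj0. case: (arg_minP f Pj0) => j Pj H. by exists j. Qed.

Section LP.
Variables (R : realFieldType) (V : lmodType R) (J : finType).
Variables (a : J -> V -> R) (b : J -> R) (c : V -> R).
Hypothesis alin : forall j (k : R) u v, a j (k *: u + v) = k * a j u + a j v.
Hypothesis clin : forall (k : R) u v, c (k *: u + v) = k * c u + c v.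
Hypothesis rec : forall d, d != 0 -> exists j, 0 < a j d.

Definition feas z := forall j, a j z <= b j.
Definition vertex z := feas z /\ forall d, (forall j, a j z = b j -> a j d = 0) -> d = 0.

Lemma lin0 {f : V -> R} : (forall k u v, f (k *: u + v) = k * f u + f v) -> f 0 = 0.
Proof.
move=> H; have := H 1 0 0; rewrite scaler0 add0r mul1r => h.
by apply: (addrI (f 0)); rewrite addr0 -h.
Qed.

Lemma linN {f : V -> R} : (forall k u v, f (k *: u + v) = k * f u + f v) ->
  forall u, f (- u) = - f u.
Proof.
move=> H u; have := H (-1) u 0; rewrite addr0 (lin0 H) addr0 scaleN1r mulN1r //.
Qed.

Lemma linB {f : V -> R} : (forall k u v, f (k *: u + v) = k * f u + f v) ->
  forall u v, f (u - v) = f u - f v.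
Proof.
move=> H u v; have := H (-1) v u; rewrite scaleN1r mulN1r addrC => ->.
by rewrite addrC.
Qed.

Lemma improve n : forall z, (#|[set j | a j z != b j]| < n)%N -> feas z ->
  exists z', vertex z' /\ c z <= c z'.
Proof.
elim: n => [//|n IH] z Hn Fz.
case: (classic (vertex z)) => [Vz|NV]; first by exists z.
have [d [Kd dn0]] : exists d, (forall j, a j z = b j -> a j d = 0) /\ d != 0.
  apply: NNPP => H; apply: NV; split=> // d Kd; apply: NNPP => dn; apply: H.
  by exists d; split=> //; apply/eqP.
pose e := if 0 <= c d then d else - d.
have Ke : forall j, a j z = b j -> a j e = 0.
  move=> j /Kd; rewrite /e; case: ifP => // _ h.
  by rewrite (linN (alin j)) h oppr0.
have en0 : e != 0 by rewrite /e; case: ifP => //; rewrite oppr_eq0.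
have ce : 0 <= c e.
  rewrite /e; case: ifP => // /negbT; rewrite (linN clin) oppr_ge0 -ltNge.
  exact: ltW.
have [j0 Hj0] := rec _ en0.
have [jm Pjm Hmin] := @fin_argmin _ _ (fun j => 0 < a j e)
   (fun j => (b j - a j z) / a j e) _ Hj0.
pose lam := (b jm - a jm z) / a jm e.
have lam0 : 0 <= lam by rewrite /lam divr_ge0 // ?subr_ge0 ?Fz // ltW.
pose z' := lam *: e + z.
have az' j : a j z' = lam * a j e + a j z by rewrite alin.
have Fz' : feas z'.
  move=> j; rewrite az'; case: (ltP 0 (a j e)) => hj.
    have := Hmin j hj; rewrite -/lam ler_pdivlMr // => h.
    by rewrite -lerBrDr.
  have := Fz j; have : lam * a j e <= 0 by rewrite mulr_ge0_le0.
  move=> h1 h2; lra.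
have cz' : c z <= c z'.
  rewrite /z' clin; have : 0 <= lam * c e by rewrite mulr_ge0.
  move=> h; lra.
have sub : [set j | a j z' != b j] \proper [set j | a j z != b j].
  apply/properP; split.
    apply/subsetP => j; rewrite !inE; apply: contra => /eqP h.
    by apply/eqP; rewrite az' (Ke _ h) mulr0 add0r.
  exists jm; rewrite !inE.
    apply/eqP => h; move: (Ke _ h) Pjm => /= ->; by rewrite ltxx.
  rewrite negbK az' /lam divfK ?subrK //.
  by rewrite gt_eqF.
have [z'' [V'' c'']] : exists z'', vertex z'' /\ c z' <= c z''.
  apply: IH => //; apply: leq_trans (proper_card sub) _; by rewrite -ltnS.
by exists z''; split => //; exact: le_trans cz' c''.
Qed.

Lemma improve_all z : feas z -> exists z', vertex z' /\ c z <= c z'.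
Proof. by apply: (@improve #|J|.+1); rewrite ltnS max_card. Qed.

Lemma vertex_uniq z w : vertex z -> (forall j, a j z = b j -> a j w = b j) -> w = z.
Proof.
case=> _ H T; apply/eqP; rewrite -subr_eq0; apply/eqP; apply: H => j hj.
by rewrite (linB (alin j)) (T _ hj) hj subrr.
Qed.

Lemma exists_opt z0 : feas z0 -> exists z, vertex z /\ forall w, feas w -> c w <= c z.
Proof.
move=> F0; apply: NNPP => Hno.
have step : forall z, vertex z -> exists z', vertex z' /\ c z < c z'.
  move=> z Vz.
  have H : ~ (forall w, feas w -> c w <= c z) by move=> H; apply: Hno; exists z.
  apply: NNPP => H'; apply: H => w Fw; apply: NNPP => hw.
  have lt : c z < c w by rewrite ltNge; apply/negP.
  have [z' [Vz' cz']] := improve_all _ Fw.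
  by apply: H'; exists z'; split => //; exact: lt_le_trans lt cz'.
have chain : forall k, exists z, vertex z /\ exists s : seq {set J},
    [/\ uniq s, size s = k & forall T, T \in s ->
        exists w, [/\ vertex w, [set j | a j w == b j] = T & c w < c z]].
  elim=> [|k [z [Vz [s [Us Ss Hs]]]]].
    have [z [Vz _]] := improve_all _ F0.
    by exists z; split=> //; exists [::]; split.
  have [z' [Vz' czz']] := step z Vz.
  exists z'; split=> //; exists ([set j | a j z == b j] :: s); split.
  - rewrite /= Us andbT; apply/negP => /Hs [w [Vw Tw cw]].
    have wz : z = w.
      apply: vertex_uniq Vw _ => j hj.
      have : j \in [set j | a j w == b j] by rewrite inE hj.
      by rewrite Tw inE => /eqP.
    by rewrite wz ltxx in cw.
  - by rewrite /= Ss.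
  - move=> T; rewrite inE => /orP [/eqP -> | /Hs [w [Vw Tw cw]]].
      by exists z.
    by exists w; split=> //; exact: lt_trans cw czz'.
have [z [_ [s [Us Ss _]]]] := chain #|{set J}|.+1.
by have := max_card (mem s); rewrite (card_uniqP Us) Ss ltnn.
Qed.

Lemma conv_feas z w (t : R) : feas z -> feas w -> 0 <= t <= 1 -> feas (t *: (w - z) + z).
Proof.
move=> Fz Fw /andP[t0 t1] j; rewrite alin (linB (alin j)).
have := Fz j; have := Fw j => h1 h2; nra.
Qed.

End LP.
Arguments feas {R V J} a b z.
Arguments lin0 {R V f}.
Arguments linN {R V f}.
Arguments linB {R V f}.
Arguments exists_opt {R V J a b c} alin clin rec {z0}.
Arguments conv_feas {R V J a b} alin {z w t}.
Arguments vertex {R V J} a b z.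


Lemma line_inj (R : fieldType) (V : lmodType R) (u z : V) : u != 0 ->
  injective (fun t : R => t *: u + z).
Proof.
move=> un0 t1 t2 /= /addIr h; apply/eqP; rewrite -subr_eq0; case: eqP => // /eqP ht.
move: un0; rewrite -[u]scale1r -(mulVf ht) -scalerA scalerBl h subrr scaler0.
by rewrite eqxx.
Qed.

Lemma kernel_exists (R : fieldType) (S Y : finType) (B : {set S}) (F : S -> Y -> R) :
  (#|Y| < #|B|)%N -> exists d : S -> R, (exists2 s, s \in B & d s != 0) /\
     forall y, \sum_s d s * F s y = 0.
Proof.
move=> lt.
have [s0 s0B] : exists s0, s0 \in B.
  by apply/card_gt0P; apply: leq_ltn_trans lt.
pose M := \matrix_(i < #|B|, j < #|Y|) F (enum_val i) (enum_val j).
have rk : (0 < \rank (kermx M))%N.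
  by rewrite mxrank_ker subn_gt0; exact: leq_ltn_trans (rank_leq_col M) lt.
have Kn0 : kermx M != 0 by rewrite -mxrank_eq0 -lt0n.
have [i Hi] : exists i, row i (kermx M) != 0.
  apply: NNPP => H; move: Kn0; apply/negP; rewrite negbK; apply/eqP/row_matrixP => i.
  rewrite row0; apply/eqP; apply: NNPP => h; apply: H; exists i; exact/negP.
pose v := row i (kermx M).
have vM : v *m M = 0 by rewrite -row_mul mulmx_ker row0.
have [k hk] : exists k, v 0 k != 0.
  apply: NNPP => H; move: Hi; apply/negP; rewrite negbK; apply/eqP/rowP => k.
  rewrite [RHS]mxE; apply/eqP; apply: NNPP => h; apply: H; exists k; exact/negP.
pose d s := if s \in B then v 0 (enum_rank_in s0B s) else 0.
exists d; split.
  exists (enum_val k); first exact: enum_valP.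
  by rewrite /d enum_valP enum_valK_in.
move=> y.
rewrite (bigID (mem B)) /= [X in _ + X]big1 ?addr0; last first.
  by move=> s /negbTE h; rewrite /d h mul0r.
rewrite big_enum_val /=.
under eq_bigr do rewrite /d enum_valP enum_valK_in.
have := congr1 (fun m : 'rV_#|Y| => m 0 (enum_rank y : 'I_#|Y|)) vM; rewrite !mxE /= => h; rewrite -[RHS]h.
by apply: eq_bigr => j _; rewrite /M !mxE enum_rankK.
Qed.
Section Main.
Variables (R : realType) (X Th A : finType).
Variables (vD vU : X -> Th -> A -> R) (bD : X -> Th -> R) (p0 : X -> R).

Local Notation S := (signal Th A).
Definition Vt := {ffun X -> {ffun S -> R^o}}.
Definition Jt := ((X * S) + (X + (X + (S * A * Th))))%type.

Lemma scaleRo (k y : R^o) : k *: y = k * y. Proof. by []. Qed.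

Definition aa (j : Jt) (pi : Vt) : R :=
  match j with
  | inl (x, s) => - pi x s
  | inr (inl x) => \sum_s pi x s
  | inr (inr (inl x)) => - \sum_s pi x s
  | inr (inr (inr (s, ah, l))) => - \sum_x (vU x l (s l) - vU x l ah) * pi x s * p0 x
  end.

Definition bb (j : Jt) : R :=
  match j with
  | inl _ => 0
  | inr (inl _) => 1
  | inr (inr (inl _)) => -1
  | inr (inr (inr _)) => 0
  end.

Definition cc (pi : Vt) : R := vbarD vD bD p0 pi.

Lemma aa_lin j (k : R) (u v : Vt) : aa j (k *: u + v) = k * aa j u + aa j v.
Proof.
case: j => [[x s]|[x|[x|[[s ah] l]]]] /=.
- rewrite !ffunE /= scaleRo; ring.
- rewrite mulr_sumr -big_split; apply: eq_bigr => s _; rewrite !ffunE /= scaleRo; ring.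
- rewrite mulrN -opprD mulr_sumr -big_split; congr (- _).
  apply: eq_bigr => s _; rewrite !ffunE /= scaleRo; ring.
- rewrite mulrN -opprD mulr_sumr -big_split; congr (- _).
  apply: eq_bigr => x _; rewrite !ffunE /= scaleRo; ring.
Qed.

Lemma cc_lin (k : R) (u v : Vt) : cc (k *: u + v) = k * cc u + cc v.
Proof.
rewrite /cc /vbarD mulr_sumr -big_split; apply: eq_bigr => x _.
rewrite /= [k * _]mulrCA -mulrDr; congr (_ * _).
rewrite mulr_sumr -big_split; apply: eq_bigr => s _; rewrite !ffunE /= scaleRo; ring.
Qed.

Lemma aa_rec (d : Vt) : d != 0 -> exists j, 0 < aa j d.
Proof.
move=> dn0.
have [x [s hxs]] : exists x s, d x s != 0.
  apply: NNPP => H; move/eqP: dn0; apply; apply/ffunP => x; apply/ffunP => s.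
  rewrite !ffunE; apply/eqP; apply: NNPP => h; apply: H; exists x, s; exact/negP.
case: (classic (exists x' s', d x' s' < 0)) => [[x' [s' h]]|H].
  by exists (inl (x', s')); rewrite /= oppr_gt0.
have pos : forall x' s', 0 <= d x' s'.
  move=> x' s'; rewrite leNgt; apply/negP => h; apply: H; by exists x', s'.
exists (inr (inl x)) => /=.
have hp : 0 < d x s by rewrite lt_def hxs pos.
apply: lt_le_trans hp _; rewrite (bigD1 s) //= lerDl; apply: sumr_ge0 => s' _; exact: pos.
Qed.

Lemma cred_feas (pi : Vt) : credible vU p0 pi <-> feas aa bb pi.
Proof.
split.
  case=> Gen Cr; case => [[x s]|[x|[x|[[s ah] l]]]] /=.
  - by rewrite oppr_le0; exact: (Gen x).1.
  - by have := (Gen x).2 => /= ->.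
  - by have := (Gen x).2 => /= ->.
  - by rewrite oppr_le0; exact: Cr.
move=> F; split.
  move=> x; split.
    by move=> s; have := F (inl (x, s)); rewrite /= oppr_le0.
  apply/eqP; rewrite eq_le; have := F (inr (inl x)); have := F (inr (inr (inl x))).
  by rewrite /= lerN2 => -> ->.
by move=> s ah l; have := F (inr (inr (inr (s, ah, l)))); rewrite /= oppr_le0.
Qed.

Hypothesis HA : (0 < #|A|)%N.

Lemma feas_pi0 : exists z0, feas aa bb z0.
Proof.
have [a0 _] := card_gt0P HA.
have ex l : exists a, [forall k, \sum_x vU x l k * p0 x <= \sum_x vU x l a * p0 x].
  have [j _ Hj] := @fin_argmin _ _ xpredT (fun a => - \sum_x vU x l a * p0 x) a0 isT.
  by exists j; apply/forallP => k; have := Hj k isT; rewrite lerN2.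
pose sstar : S := [ffun l => xchoose (ex l)].
have Hs l k : \sum_x vU x l k * p0 x <= \sum_x vU x l (sstar l) * p0 x.
  by rewrite ffunE; exact: (forallP (xchooseP (ex l)) k).
pose z0 : Vt := [ffun x => [ffun s => if s == sstar then 1 else 0]].
exists z0; apply/cred_feas; split.
  move=> x; split.
    by move=> s; rewrite !ffunE; case: eqP => _ //; rewrite ler01.
  rewrite /= (bigD1 sstar) //= !ffunE eqxx big1 ?addr0 // => s /negbTE.
  by rewrite !ffunE => ->.
move=> s ah l; case: (eqVneq s sstar) => [->|ne].
  under eq_bigr do rewrite !ffunE eqxx mulr1 mulrBl.
  by rewrite sumrB subr_ge0; have := Hs l ah; rewrite ffunE.
by rewrite big1 // => x _; rewrite !ffunE (negbTE ne) mulr0 mul0r.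
Qed.

Lemma main_thm :
  ((exists pi, optimal vD vU bD p0 pi /\
       forall pi', optimal vD vU bD p0 pi' -> pi' = pi)
   \/ ~ (exists l : seq (generator R X Th A),
            forall pi, optimal vD vU bD p0 pi -> pi \in l))
  /\ exists pistar, optimal vD vU bD p0 pistar /\
       forall x : X,
         (#|A| ^ #|Th| - #|X| <= #|[set s : signal Th A | pistar x s == 0%R]|)%N.
Proof.
have [z0 F0] := feas_pi0.
have [z [[Fz Kz] Oz]] := exists_opt aa_lin cc_lin aa_rec F0.
have optE : forall pi : Vt, optimal vD vU bD p0 pi <-> (feas aa bb pi /\ cc pi = cc z).
  move=> pi; split.
    case=> /cred_feas Fp Op; split=> //.
    by apply/eqP; rewrite eq_le Oz //= Op //; apply/cred_feas.
  case=> Fp E; split; first by apply/cred_feas.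
  move=> pi' /cred_feas H; change (cc pi' <= cc pi); rewrite E; exact: Oz.
have optz : optimal vD vU bD p0 z by apply/optE.
split.
  case: (classic (exists w : Vt, optimal vD vU bD p0 w /\ w <> z)) => [[w [Ow wz]]|H]; last first.
    left; exists z; split=> // pi' Opi'; apply: NNPP => ne; apply: H; by exists pi'; split.
  right => -[l Hl].
  have [Fw Ew] := (optE w).1 Ow.
  have un0 : w - z != 0 by rewrite subr_eq0; apply/eqP.
  pose f (k : nat) : Vt := (k.+1%:R)^-1 *: (w - z) + z.
  have Of k : optimal vD vU bD p0 (f k).
    apply/optE; split.
      apply: (conv_feas aa_lin) => //.
      by rewrite invr_ge0 ler0n /= invf_le1 ?ltr0Sn // ler1n.
    by rewrite /f cc_lin (linB cc_lin) Ew subrr mulr0 add0r.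
  have finj : injective f.
    move=> k1 k2 h; have := @line_inj _ _ _ z un0 _ _ h.
    by move/invr_inj/eqP; rewrite eqr_nat eqSS => /eqP.
  have := @uniq_leq_size _ (map (fun k => f k : generator R X Th A) (iota 0 (size l).+1)) l.
  rewrite map_inj_uniq ?iota_uniq // size_map size_iota ltnn.
  move=> H; suff : false by []; apply: H => // p /mapP [k _ ->]; exact: Hl (Of k).
exists z; split=> // x.
pose B := [set s | [exists x, z x s != 0]].
have cardB : (#|B| <= #|X|)%N.
  rewrite leqNgt; apply/negP => lt.
  have [d [[s0 s0B ds0] Hd]] := @kernel_exists R S X B (fun s x => z x s) lt.
  pose D : Vt := [ffun x => [ffun s => d s * z x s]].
  have Dn0 : D != 0.
    move: s0B; rewrite inE => /existsP [x0 hx0].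
    apply/eqP => /ffunP /(_ x0) /ffunP /(_ s0); rewrite !ffunE => /eqP.
    by rewrite mulf_eq0 (negbTE ds0) (negbTE hx0).
  suff : D = 0 by move/eqP; rewrite (negbTE Dn0).
  apply: Kz => j; case: j => [[x' s]|[x'|[x'|[[s ah] l]]]] /=.
  - by move=> /eqP; rewrite oppr_eq0 => /eqP h; rewrite !ffunE h mulr0 oppr0.
  - by move=> _; rewrite (eq_bigr (fun s => d s * z x' s)) ?Hd // => s _; rewrite !ffunE.
  - by move=> _; rewrite (eq_bigr (fun s => d s * z x' s)) ?Hd ?oppr0 // => s _; rewrite !ffunE.
  - move=> h.
    have -> : \sum_y (vU y l (s l) - vU y l ah) * D y s * p0 y =
        d s * \sum_y (vU y l (s l) - vU y l ah) * z y s * p0 y.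
      by rewrite mulr_sumr; apply: eq_bigr => y _; rewrite !ffunE; ring.
    by rewrite -mulrN h mulr0.
have sub : ~: B \subset [set s | z x s == 0].
  by apply/subsetP => s; rewrite !inE negb_exists => /forallP /(_ x); rewrite negbK.
have e1 : (#|B| + #|~: B| = #|A| ^ #|Th|)%N by rewrite cardsC; exact: card_ffun.
rewrite -e1; apply: leq_trans (subset_leq_card sub).
by rewrite leq_subLR leq_add2r.
Qed.

End Main.

Theorem proposition5 (R : realType) (X Th A : finType)
    (vD vU : X -> Th -> A -> R) (bD : X -> Th -> R) (p0 : X -> R) :
  (0 < #|A|)%N ->
  (forall x, is_dist (bD x)) ->
  is_dist p0 ->
  ((exists pi, optimal vD vU bD p0 pi /\
       forall pi', optimal vD vU bD p0 pi' -> pi' = pi)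
   \/ ~ (exists l : seq (generator R X Th A),
            forall pi, optimal vD vU bD p0 pi -> pi \in l))
  /\ exists pistar, optimal vD vU bD p0 pistar /\
       forall x : X,
         (#|A| ^ #|Th| - #|X| <= #|[set s : signal Th A | pistar x s == 0%R]|)%N.
Proof. by move=> HA _ _; exact: main_thm. Qed.
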